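(* Let $G$ be a finite undirected graph. Let $K$ be the simplicial complex whose vertices are the nonempty sets $A\subseteq V(G)$ with $N(A)\neq\emptyset$ and $N(N(A))=A$, and whose simplices are the nonempty sets $\{A_1,\dots,A_t\}$ of such vertices with $\bigcap_{i=1}^tA_i\neq\emptyset$ and $N\big(\bigcup_{i=1}^tA_i\big)\neq\emptyset$. Then $K$ collapses onto its subcomplex $\mathcal{L}o(G)$ (the order complex of the vertex set of $K$ ordered by inclusion). (Equivalently, $K$ is the atom crosscut complex of the lattice obtained from the opposite of the face poset of $\mathrm{Hom}(K_2,G)$ by adjoining a minimum and a maximum, with the atom $(A,N(A))$ indexed by $A$.)
   Context: For $S\subseteq V(G)$, $N(S)=\bigcap_{v\in S}N(v)$ is the set of common neighbors of vertices of $S$. The neighborhood complex $\mathcal N(G)$ has simplices the nonempty $S\subseteq V(G)$ with $N(S)\neq\emptyset$; the Lovász complex $\mathcal{L}o(G)$ is the order complex of the poset $\{N(S):S\text{ a simplex of }\mathcal N(G)\}$ ordered by inclusion (this poset equals the vertex set of $K$). $\mathrm{Hom}(K_2,G)$ is the subcomplex of $\Delta^{V(G)}\times\Delta^{V(G)}$ consisting of the cells $\sigma\times\tau$ with $\sigma,\tau$ nonempty subsets of $V(G)$ and $\sigma\times\tau\subseteq E(G)$ (i.e. $(x,y)\in E(G)$ for all $x\in\sigma$, $y\in\tau$). *)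

(* Defs.v *)
From Stdlib Require Import Relation_Operators.
From mathcomp Require Import all_boot.
Set Implicit Arguments. Unset Strict Implicit. Unset Printing Implicit Defensive.

(** Finite abstract simplicial complexes on a finite vertex type V are
    represented by their set of (nonempty) faces : {set {set V}}. *)

Definition elem_collapse (V : finType) (K L : {set {set V}}) : Prop :=
  exists sigma tau : {set V},
    [/\ sigma \in K, tau \in K, sigma \proper tau,
        (forall rho, rho \in K -> sigma \subset rho -> rho = sigma \/ rho = tau)
      & L = K :\: [set sigma; tau]].

Definition collapses (V : finType) (K L : {set {set V}}) : Prop :=
  clos_refl_trans_1n _ (@elem_collapse V) K L.

Section Graph.
Variables (T : finType) (e : rel T).

Definition Nb (S : {set T}) : {set T} := [set y | [forall x in S, e x y]].

Definition nbhd_complex : {set {set T}} :=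
  [set S : {set T} | (S != set0) && (Nb S != set0)].

Definition lovasz_poset : {set {set T}} := [set Nb S | S in nbhd_complex].

Definition lovasz_complex : {set {set {set T}}} :=
  [set F : {set {set T}} | [&& F != set0, F \subset lovasz_poset &
     [forall A in F, forall B in F, (A \subset B) || (B \subset A)]]].

Definition K_vertices : {set {set T}} :=
  [set A : {set T} | [&& A != set0, Nb A != set0 & Nb (Nb A) == A]].

Definition K_complex : {set {set {set T}}} :=
  [set F : {set {set T}} | [&& F != set0, F \subset K_vertices,
     \bigcap_(A in F) A != set0 & Nb (\bigcup_(A in F) A) != set0]].

End Graph.

(* Main.v *)
Require Import Defs.
From Stdlib Require Import Relation_Operators.
From mathcomp Require Import all_boot.
Set Implicit Arguments. Unset Strict Implicit. Unset Printing Implicit Defensive.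

Lemma collapse_matching (V : finType) (L : {set {set V}})
  (m : {set V} -> {set V}) (phi : {set V} -> nat) :
 forall K : {set {set V}}, L \subset K ->
 (forall F, F \in K :\: L -> [/\ m F \in K :\: L, m (m F) = F, phi (m F) = phi F
     & (F \proper m F) || (m F \proper F)]) ->
 (forall s r, s \in K :\: L -> s \proper m s -> r \in K -> s \proper r ->
     r != m s -> r \notin L /\ phi s < phi r) ->
 collapses K L.
Proof.
move=> K; move: {2}#|K| (leqnn #|K|) => n; elim: n K => [|n IH] K hn LK HM HR.
  have K0 : K = set0 by apply/eqP; rewrite -cards_eq0 -leqn0.
  have ->: K = L by apply/eqP; rewrite eqEsubset LK K0 sub0set.
  exact: rt1n_refl.
case: (boolP (K \subset L)) => KL.
  have ->: K = L by apply/eqP; rewrite eqEsubset KL LK.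
  exact: rt1n_refl.
have [F0 F0K F0L] := subsetPn KL.
have F0KL : F0 \in K :\: L by rewrite inE F0L F0K.
case: (arg_maxnP phi F0KL) => F FKL Fmax.
pose s := if F \proper m F then F else m F.
have [sKL sp phis] : [/\ s \in K :\: L, s \proper m s & phi s = phi F].
  have [mFKL mmF phimF hp] := HM F FKL.
  rewrite /s; case: ifP => Fp; first by [].
  by rewrite mmF; move: hp; rewrite Fp /= => ->.
have [msKL mms _ _] := HM s sKL.
move: (sKL) (msKL); rewrite !inE => /andP[sL sK] /andP[msL msK].
apply: (@rt1n_trans _ _ _ (K :\: [set s; m s])).
  exists s, (m s); split => //.
  move=> rho rhoK srho.
  have [/eqP->|ns] := boolP (rho == s); first by left.
  have [/eqP->|nms] := boolP (rho == m s); first by right.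
  have sprho : s \proper rho by rewrite properEneq eq_sym ns.
  have [rL lt] := HR s rho sKL sp rhoK sprho nms.
  have rKL : rho \in K :\: L by rewrite inE rL rhoK.
  by have := Fmax rho rKL; rewrite /= -phis leqNgt lt.
apply: IH.
- have: #|K :\: [set s; m s]| < #|K|.
    apply: proper_card; rewrite properE subsetDl /=.
    apply/subsetPn; exists s => //; by rewrite !inE eqxx.
  by move=> h; rewrite -ltnS (leq_trans h).
- apply/subsetP=> x xL; rewrite !inE (subsetP LK) // andbT.
  by apply/negP=> /orP[] /eqP ex; [move: sL|move: msL]; rewrite -ex xL.
- move=> G; rewrite !inE => /andP[GL /andP[]]; rewrite negb_or => /andP[Gs Gms] GK.
  have GKL : G \in K :\: L by rewrite inE GL GK.
  have [mGKL mmG phimG hp] := HM G GKL.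
  split => //; move: mGKL; rewrite !inE => /andP[-> ->]; rewrite andbT /=.
  apply/negP=> /orP[] /eqP ex.
    by move: Gms; rewrite -ex mmG eqxx.
  by move: Gs; rewrite -mmG ex mms eqxx.
- move=> s' r; rewrite !inE => /andP[s'L /andP[_ s'K]] sp' /andP[_ rK].
  apply: HR => //; by rewrite inE s'L s'K.
Qed.

Section G.
Variables (T : finType) (e : rel T) (es : symmetric e).

Lemma Nb_anti (A B : {set T}) : A \subset B -> Nb e B \subset Nb e A.
Proof.
move=> AB; apply/subsetP=> y; rewrite !inE => /forallP H; apply/forallP=> x.
by apply/implyP=> xA; exact: (implyP (H x) (subsetP AB x xA)).
Qed.

Lemma Nb2_ext (A : {set T}) : A \subset Nb e (Nb e A).
Proof.
apply/subsetP=> x xA; rewrite inE; apply/forallP=> y; apply/implyP.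
by rewrite inE => /forallP/(_ x)/implyP/(_ xA); rewrite es.
Qed.

Lemma Nb3 (A : {set T}) : Nb e (Nb e (Nb e A)) = Nb e A.
Proof. by apply/eqP; rewrite eqEsubset Nb_anti ?Nb2_ext. Qed.

Lemma Nb2_mono (A B : {set T}) : A \subset B -> Nb e (Nb e A) \subset Nb e (Nb e B).
Proof. by move=> AB; apply: Nb_anti; apply: Nb_anti. Qed.

Definition cmp (A B : {set T}) := (A \subset B) || (B \subset A).
Definition Hs (F : {set {set T}}) := [set A in F | [exists B in F, ~~ cmp A B]].
Definition vv (F : {set {set T}}) := Nb e (Nb e (\bigcup_(A in Hs F) A)).
Definition mm (F : {set {set T}}) := if vv F \in F then F :\ vv F else vv F |: F.
Definition phi (F : {set {set T}}) := #|vv F| * (#|{set T}|).+1 + #|F :\ vv F|.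

Lemma Hs_mono (F G : {set {set T}}) : F \subset G -> Hs F \subset Hs G.
Proof.
move=> FG; apply/subsetP=> A; rewrite !inE => /andP[AF /existsP[B /andP[BF nc]]].
rewrite (subsetP FG) //=; apply/existsP; exists B; by rewrite (subsetP FG).
Qed.

Lemma nex_cmp (G : {set {set T}}) y : (forall B, B \in G -> cmp y B) ->
  [exists B in G, ~~ cmp y B] = false.
Proof.
move=> H; apply/negbTE; rewrite negb_exists; apply/forallP=> B.
by apply/negP=> /andP[/H ->].
Qed.

Lemma Hs_U1 (F : {set {set T}}) y : (forall B, B \in F -> cmp y B) -> Hs (y |: F) = Hs F.
Proof.
move=> H; apply/setP=> A; rewrite !inE.
have H' : forall B, B \in y |: F -> cmp y B.
  by move=> B; rewrite !inE => /orP[/eqP->|/H//]; rewrite /cmp subxx.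
case: (boolP (A == y)) => [/eqP->|Ay] /=.
  by rewrite !nex_cmp // andbF.
apply/andP/andP=> -[AF /existsP[B /andP[BF nc]]]; split=> //; apply/existsP; exists B.
  rewrite nc andbT; move: BF; rewrite !inE => /orP[/eqP Be|//].
  by move: nc; rewrite Be /cmp orbC -/(cmp y A) H.
by rewrite inE BF orbT.
Qed.

Lemma Hs_D1 (F : {set {set T}}) y : (forall B, B \in F -> cmp y B) -> Hs (F :\ y) = Hs F.
Proof.
move=> H; apply/setP=> A; rewrite !inE.
have H' : forall B, B \in F :\ y -> cmp y B.
  by move=> B; rewrite inE => /andP[_ /H].
case: (boolP (A == y)) => [/eqP->|Ay] /=.
  by rewrite !nex_cmp // andbF.
apply/andP/andP=> -[AF /existsP[B /andP[BF nc]]]; split=> //; apply/existsP; exists B.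
  by move: BF; rewrite inE => /andP[_ ->].
rewrite !inE BF nc !andbT; apply/eqP=> By.
by move: nc; rewrite By /cmp orbC -/(cmp y A) H.
Qed.

Lemma sub0_eq (X : finType) (A B : {set X}) : A \subset B -> B = set0 -> A == set0.
Proof. by move=> AB B0; rewrite -subset0 -B0. Qed.

Lemma Hs_in (F : {set {set T}}) h : h \in Hs F -> h \in F.
Proof. by rewrite inE => /andP[]. Qed.

Lemma Kv_closed (A : {set T}) : A \in K_vertices e -> Nb e (Nb e A) = A.
Proof. by rewrite inE => /and3P[_ _ /eqP]. Qed.

Lemma K_sub (F : {set {set T}}) : F \in K_complex e -> F \subset K_vertices e.
Proof. by rewrite inE => /and4P[]. Qed.

Lemma K_down (F G : {set {set T}}) : F \in K_complex e -> G \subset F -> G != set0 -> G \in K_complex e.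
Proof.
rewrite !inE => /and4P[_ FK cap cup] GF G0; rewrite G0 (subset_trans GF FK) /=.
apply/andP; split.
  apply: contraNneq cap => c0; apply: sub0_eq c0.
  by apply/bigcapsP=> A AG; apply: bigcap_inf; apply: (subsetP GF).
apply: contraNneq cup => c0; apply: sub0_eq c0; apply: Nb_anti.
apply/bigcupsP=> A AG; apply/subsetP=> x xA; apply/bigcupP; exists A => //.
exact: (subsetP GF).
Qed.

Section Key.
Variable F : {set {set T}}.
Hypothesis FK : F \in K_complex e.
Hypothesis HsF : Hs F != set0.

Local Notation U := (\bigcup_(A in Hs F) A).
Local Notation y := (vv F).

Lemma Hs_sub_y h : h \in Hs F -> h \subset y.
Proof.
move=> hH; apply: subset_trans (Nb2_ext _); exact: (bigcup_sup h hH).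
Qed.

Lemma cmp_y B : B \in F -> cmp y B.
Proof.
move=> BF; case: (boolP (B \in Hs F)) => BH.
  by rewrite /cmp Hs_sub_y ?orbT.
have cB : forall h, h \in Hs F -> cmp B h.
  move=> h hH; move: BH; rewrite inE BF /= negb_exists => /forallP/(_ h).
  by rewrite (Hs_in hH) /= negbK. 
case: (boolP [exists h in Hs F, B \subset h]).
  case/existsP=> h /andP[hH Bh]; by rewrite /cmp (subset_trans Bh (Hs_sub_y hH)) orbT.
rewrite negb_exists => /forallP nB.
have UB : U \subset B.
  apply/bigcupsP=> h hH; move: (cB h hH) (nB h); rewrite hH /= /cmp => /orP[->//|->//].
have cl := Kv_closed (subsetP (K_sub FK) B BF).
have := Nb2_mono UB; rewrite cl => yB.
by rewrite /cmp yB.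
Qed.

Lemma y_vertex : y \in K_vertices e.
Proof.
have [h hH] := set0Pn _ HsF.
have hF : h \in F by move: hH; rewrite inE => /andP[].
have hv := subsetP (K_sub FK) h hF.
move: (FK); rewrite inE => /and4P[_ _ _ cup].
rewrite inE /vv (Nb3 (\bigcup_(A in Hs F) A)) eqxx andbT; apply/andP; split.
  move: hv; rewrite inE => /andP[h0 _]; apply: contraNneq h0 => y0.
  by apply: sub0_eq y0; apply: Hs_sub_y hH.
apply: contraNneq cup => c0; apply: sub0_eq c0; apply: Nb_anti.
apply/bigcupsP=> A AH; apply/subsetP=> x xA; apply/bigcupP; exists A => //.
exact: Hs_in AH.
Qed.

Lemma y_notin_Hs : y \notin Hs F.
Proof.
apply/negP; rewrite inE => /andP[_ /existsP[B /andP[BF]]]; by rewrite cmp_y.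
Qed.

Lemma Hs_mm : Hs (mm F) = Hs F.
Proof. by rewrite /mm; case: ifP => _; [apply: Hs_D1|apply: Hs_U1]; exact: cmp_y. Qed.

Lemma vv_mm : vv (mm F) = vv F.
Proof. by rewrite /vv Hs_mm. Qed.

Lemma bigcap_sub (G : {set {set T}}) A : A \in G -> \bigcap_(B in G) B \subset A.
Proof. by move=> AG; apply/subsetP=> x /bigcapP; apply. Qed.

Lemma bigcup_sub (G : {set {set T}}) A : A \in G -> A \subset \bigcup_(B in G) B.
Proof. by move=> AG; apply/subsetP=> x xA; apply/bigcupP; exists A. Qed.

Lemma mm_K : mm F \in K_complex e.
Proof.
have [h hH] := set0Pn _ HsF.
have hF := Hs_in hH.
rewrite /mm; case: ifP => yF.
  apply: K_down FK (subD1set _ _) _; apply/set0Pn; exists h.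
  rewrite !inE hF andbT; apply/eqP=> hy; move: hH; rewrite hy.
  by rewrite (negbTE y_notin_Hs).
move: (FK); rewrite !inE => /and4P[_ FKv cap cup].
apply/and4P; split.
- by apply/set0Pn; exists (vv F); rewrite !inE eqxx.
- by rewrite subUset sub1set y_vertex FKv.
- rewrite big_setU1 ?yF //= (setIidPr _) //.
  exact: subset_trans (bigcap_sub hF) (Hs_sub_y hH).
- rewrite big_setU1 ?yF //=; apply: contraNneq cup => c0; apply: sub0_eq c0.
  rewrite -(Nb3 (\bigcup_(A in F) A)); apply: Nb_anti; rewrite subUset Nb2_ext andbT.
  apply: Nb2_mono; apply/bigcupsP=> A AH; exact: bigcup_sub (Hs_in AH).
Qed.

Lemma mm_mm : mm (mm F) = F.
Proof.
case yF: (vv F \in F).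
  have E : mm F = F :\ vv F by rewrite /mm yF.
  by rewrite {1}/mm vv_mm E setD11 (setD1K yF).
have E : mm F = vv F |: F by rewrite /mm yF.
by rewrite {1}/mm vv_mm E setU11 setU1K ?yF.
Qed.

Lemma phi_mm : phi (mm F) = phi F.
Proof.
rewrite /phi vv_mm (_ : mm F :\ vv F = F :\ vv F) //.
rewrite /mm; case: ifP => _;
  by apply/setP=> x; rewrite !inE; case: (x == vv F).
Qed.

Lemma mm_proper : (F \proper mm F) || (mm F \proper F).
Proof.
rewrite /mm; case: ifP => yF; first by rewrite properD1 ?orbT.
by rewrite properE subsetUr subUset sub1set yF.
Qed.

End Key.
Lemma poset_eq : lovasz_poset e = K_vertices e.
Proof.
apply/setP=> A; apply/imsetP/idP.
  case=> S; rewrite inE => /andP[S0 NS0] ->.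
  rewrite inE NS0 (Nb3 S) eqxx andbT /=.
  apply: contraNneq S0 => h; apply: sub0_eq h; exact: Nb2_ext.
move=> Av; exists (Nb e A); last by rewrite Kv_closed.
rewrite inE Kv_closed //; move: Av; rewrite inE => /and3P[A0 NA0 _]; by rewrite NA0 A0.
Qed.

Lemma chain_min (F : {set {set T}}) : F != set0 ->
  (forall A B, A \in F -> B \in F -> cmp A B) ->
  exists2 m, m \in F & forall B, B \in F -> m \subset B.
Proof.
move=> /set0Pn[A0 A0F] hc.
case: (arg_minnP (fun A : {set T} => #|A|) A0F) => m mF mmin.
exists m => // B BF; move: (hc m B mF BF); rewrite /cmp => /orP[//|Bm].
have : B == m by rewrite eqEcard Bm; apply: (mmin B BF).
by move/eqP->.
Qed.

Lemma chain_max (F : {set {set T}}) : F != set0 ->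
  (forall A B, A \in F -> B \in F -> cmp A B) ->
  exists2 M, M \in F & forall B, B \in F -> B \subset M.
Proof.
move=> /set0Pn[A0 A0F] hc.
case: (arg_maxnP (fun A : {set T} => #|A|) A0F) => M MF Mmax.
exists M => // B BF; move: (hc B M BF MF); rewrite /cmp => /orP[//|MB].
have : M == B by rewrite eqEcard MB; apply: (Mmax B BF).
by move/eqP->.
Qed.

Lemma L_iff F : F \in K_complex e -> (F \in lovasz_complex e) = (Hs F == set0).
Proof.
rewrite !inE poset_eq => /and4P[F0 FKv _ _]; rewrite F0 FKv /=.
apply/idP/idP.
  move=> /forallP H; apply/eqP/setP=> A; rewrite !inE.
  apply/negbTE/negP => /andP[AF /existsP[B /andP[BF nc]]].
  move: (H A); rewrite AF /= => /forallP/(_ B); rewrite BF /=.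
  by move: nc; rewrite /cmp => /negbTE ->.
move=> /eqP H0; apply/forallP=> A; apply/implyP=> AF; apply/forallP=> B.
apply/implyP=> BF; apply/negPn/negP => nc.
have : A \in Hs F by rewrite inE AF; apply/existsP; exists B; rewrite BF.
by rewrite H0 inE.
Qed.

Lemma L_sub : lovasz_complex e \subset K_complex e.
Proof.
apply/subsetP=> F; rewrite !inE poset_eq => /and3P[F0 FKv /forallP H].
have hc : forall A B, A \in F -> B \in F -> cmp A B.
  move=> A B AF BF; move: (H A); rewrite AF /= => /forallP/(_ B).
  by rewrite BF.
rewrite F0 FKv /=.
have [m mF mmin] := chain_min F0 hc.
have [M MF Mmax] := chain_max F0 hc.
move: (subsetP FKv m mF) (subsetP FKv M MF); rewrite !inE.
move=> /and3P[m0 _ _] /and3P[_ NM0 _]; apply/andP; split.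
  apply: contraNneq m0 => c0; apply: sub0_eq c0; exact/bigcapsP.
apply: contraNneq NM0 => c0; apply: sub0_eq c0; apply: Nb_anti; exact/bigcupsP.
Qed.

Lemma main_collapse : collapses (K_complex e) (lovasz_complex e).
Proof.
apply: (collapse_matching (m := mm) (phi := phi) L_sub).
  move=> F; rewrite inE => /andP[FL FK].
  have HsF : Hs F != set0 by rewrite -(L_iff FK).
  have mK := mm_K FK HsF.
  split.
  - by rewrite inE mK (L_iff mK) Hs_mm // HsF.
  - exact: mm_mm.
  - exact: phi_mm.
  - exact: mm_proper.
move=> s r; rewrite inE => /andP[sL sK] sp rK sr rms.
have HsS : Hs s != set0 by rewrite -(L_iff sK).
have yns : vv s \notin s.
  apply/negP=> ys; move: sp; by rewrite /mm ys properE subD1set andbF.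
have msE : mm s = vv s |: s by rewrite /mm (negbTE yns).
have Hsm := Hs_mono (proper_sub sr).
have HsR : Hs r != set0 by apply: contraNneq HsS => h; apply: sub0_eq h.
split; first by rewrite (L_iff rK) HsR.
have vsub : vv s \subset vv r.
  apply: Nb2_mono; apply/bigcupsP=> A AH; exact: bigcup_sub (subsetP Hsm A AH).
have sD : s :\ vv s = s.
  apply/setP=> x; rewrite !inE; case: (eqVneq x (vv s)) => [->|] //=.
  by rewrite (negbTE yns).
rewrite /phi sD.
case: (boolP (vv r == vv s)) => [/eqP vr|vr].
  rewrite vr ltn_add2l; apply: proper_card; rewrite properEneq; apply/andP; split.
    apply/eqP=> E; case: (boolP (vv s \in r)) => yr.
      have h1 := setD1K yr; rewrite -E in h1.
      by move: rms; rewrite msE h1 eqxx.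
    have : r :\ vv s = r.
      apply/setP=> x; rewrite !inE; case: (eqVneq x (vv s)) => [->|] //=.
      by rewrite (negbTE yr).
    by move=> rE; rewrite -E in rE; move: sr; rewrite rE properxx.
  apply/subsetP=> x xs; rewrite !inE (subsetP (proper_sub sr)) // andbT.
  by apply: contraNneq yns => <-.
have lt : #|vv s| < #|vv r|.
  by apply: proper_card; rewrite properEneq eq_sym vr vsub.
have c1 : #|s| < (#|{set T}|).+1 by rewrite ltnS max_card.
have : #|vv s|.+1 * (#|{set T}|).+1 <= #|vv r| * (#|{set T}|).+1.
  by rewrite leq_mul2r lt orbT.
rewrite mulSn => h.
apply: (leq_trans _ (leq_addr _ _)); apply: leq_trans h.
by rewrite addnC -addSn leq_add2r.
Qed.

End G.

Unset Implicit Arguments.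
Theorem mainTheorem7 (T : finType) (e : rel T) (e_sym : symmetric e) :
  collapses (K_complex e) (lovasz_complex e).
Proof. exact: main_collapse. Qed.
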